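(* For $i\in\{0,1\}$ and $m\ge0$, $$\Psi^{-1}\big(P_{\Lambda_0}^{\Lambda_i}(w_m)\big)=\{(\mu_1,\dots,\mu_l)\in\mathcal{Y}(0):\ \text{the parts }\mu_k\text{ are distinct and all odd (if }i=0\text{) resp. all even (if }i=1\text{)},\ \mu_1\le m\},$$ where $P_{\Lambda_0}^{\Lambda_i}(w_m)$ is the set of $\Lambda_i$-dominant LS paths of shape $\Lambda_0$ whose initial direction is $\le w_m$ in Bruhat order.
   Context: Notation as follows. $\widehat{\mathfrak{sl}_2}$: affine Kac–Moody algebra, simple roots $\alpha_0,\alpha_1$, fundamental weights $\Lambda_0,\Lambda_1$, Weyl group $W=\langle s_0,s_1\rangle$; $s_j:=s_{j\bmod 2}$ and $w_k:=s_{k-1}\cdots s_1s_0$ ($w_0=1$); these are the minimal coset representatives of $W/W_{\Lambda_0}$ and $w_m>w_n$ in Bruhat order iff $m>n$. An LS path of shape $\Lambda_0$ is written $\pi=(\sigma_1>\dots>\sigma_r;\,0=a_0<a_1<\dots<a_r=1)$; $\sigma_1$ is its initial direction; its turning points are $\sum_{k\le j}(a_k-a_{k-1})\sigma_k\Lambda_0$ for $0\le j\le r$; $\pi$ is $\lambda$-dominant if $\lambda+\gamma$ is dominant for every turning point $\gamma$. $\mathcal{Y}(0)$ is the set of partitions with distinct nonzero parts (regular charged partitions of charge $0$). For $b=(\mu_1>\dots>\mu_l>0)$ put $m=\mu_1$, $n=l$, $\tilde b=(\mu_1-n,\mu_2-(n-1),\dots,\mu_l-1)$, and let the conjugate of $\tilde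 b$ be $(i_{n+1}\ge\dots\ge i_m)$. Then $\Psi(b)=(w_m>w_{m-1}>\dots>w_n;\ 0<\tfrac{i_m}{m}<\dots<\tfrac{i_{n+1}}{n+1}<1)$, and $\Psi(\emptyset)=(1;0<1)$. *)

(* Defs.v *)
From mathcomp Require Import all_boot all_order all_algebra.
Set Implicit Arguments. Unset Strict Implicit. Unset Printing Implicit Defensive.
Import Order.TTheory GRing.Theory Num.Theory.
Local Open Scope ring_scope.

(* A (rational) weight c0*Lambda_0 + c1*Lambda_1 + d*delta is the triple
   ((c0, c1), d). *)
Definition weight := ((rat * rat) * rat)%type.

Definition wadd (x y : weight) : weight :=
  ((x.1.1 + y.1.1, x.1.2 + y.1.2), x.2 + y.2).
Definition wscale (a : rat) (x : weight) : weight :=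
  ((a * x.1.1, a * x.1.2), a * x.2).
Definition wzero : weight := ((0, 0), 0).

Definition Lam0 : weight := ((1, 0), 0).
Definition Lam1 : weight := ((0, 1), 0).
Definition Lam (i : nat) : weight := if i == 0%N then Lam0 else Lam1.

(* simple roots alpha_0 = 2 Lambda_0 - 2 Lambda_1 + delta,
   alpha_1 = 2 Lambda_1 - 2 Lambda_0 (indices taken mod 2) *)
Definition alpha (j : nat) : weight :=
  if ~~ odd j then ((2, -2), 1) else ((-2, 2), 0).

Definition pairing (j : nat) (x : weight) : rat :=
  if ~~ odd j then x.1.1 else x.1.2.

Definition sref (j : nat) (x : weight) : weight :=
  wadd x (wscale (- pairing j x) (alpha j)).

(* action of w_k = s_{k-1} ... s_1 s_0 : w_0 = 1, w_{k+1} = s_k w_k *)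
Fixpoint wact (k : nat) (x : weight) : weight :=
  match k with
  | 0%N => x
  | k'.+1 => sref k' (wact k' x)
  end.

Definition dominant (x : weight) : Prop :=
  0 <= pairing 0 x /\ 0 <= pairing 1 x.

Definition is_int (q : rat) : Prop := exists z : int, q = z%:~R.

(* A path of shape Lambda_0 is represented as (dirs, times), where
   dirs = [:: k_1; ...; k_r] encodes sigma_j = w_{k_j} (the minimal coset
   representatives of W / W_{Lambda_0}), and
   times = [:: a_0; a_1; ...; a_r] with a_0 = 0, a_r = 1. *)
Definition path := (seq nat * seq rat)%type.

(* a-chain for (w_k, w_j), k > j: the unique maximal chain in W/W_{Lambda_0}
   is w_k > w_{k-1} > ... > w_j, with w_{t+1} = s_{alpha_{t mod 2}} w_t, and
   the Littelmann condition is a * <w_t Lambda_0, alpha_{t mod 2}^vee> in Z. *)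
Definition a_chain (a : rat) (k j : nat) : Prop :=
  (j < k)%N /\
  forall t : nat, (j <= t)%N -> (t < k)%N -> is_int (a * pairing t (wact t Lam0)).

Definition is_LS (p : path) : Prop :=
  let: (ds, ts) := p in
  let r := size ds in
  (0 < r)%N /\ size ts = r.+1 /\ nth 0 ts 0 = 0 /\ nth 0 ts r = 1 /\
      sorted gtn ds /\ sorted (fun x y : rat => x < y) ts /\
      forall j : nat, (1 <= j)%N -> (j < r)%N ->
        a_chain (nth 0 ts j) (nth 0%N ds j.-1) (nth 0%N ds j).

Definition turning (p : path) (j : nat) : weight :=
  let: (ds, ts) := p in
  foldr wadd wzero
    [seq wscale (nth 0 ts k - nth 0 ts k.-1) (wact (nth 0%N ds k.-1) Lam0)
    | k <- iota 1 j].

Definition lam_dominant (lam : weight) (p : path) : Prop :=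
  forall j : nat, (j <= size p.1)%N -> dominant (wadd lam (turning p j)).

Definition init_dir (p : path) : nat := nth 0%N p.1 0.

Definition P_set (i m : nat) (p : path) : Prop :=
  is_LS p /\ lam_dominant (Lam i) p /\ (init_dir p <= m)%N.

Definition isY0 (b : seq nat) : bool := sorted gtn b && all (fun x => 0 < x)%N b.

Definition btilde (b : seq nat) : seq nat :=
  let n := size b in [seq (nth 0%N b k - (n - k))%N | k <- iota 0 n].

(* i_j = (j - n)-th part of the conjugate of btilde, for n < j <= m *)
Definition iconj (b : seq nat) (j : nat) : nat :=
  count (fun x => (j - size b <= x)%N) (btilde b).

Definition Psi (b : seq nat) : path :=
  match b with
  | [::] => ([:: 0%N], [:: 0; 1])
  | mu1 :: _ =>
    let m := mu1 in let n := size b in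
    ([seq (m - t)%N | t <- iota 0 (m - n).+1],
     0 :: [seq ((iconj b (m - t))%:R / (m - t)%:R : rat) | t <- iota 0 (m - n)]
       ++ [:: 1])
  end.

(* Main.v *)
Require Import Defs.
From mathcomp Require Import all_boot all_order all_algebra.
From mathcomp Require Import zify ring lra.
Set Implicit Arguments. Unset Strict Implicit.
Local Open Scope ring_scope.

Definition G (b : seq nat) (k : nat) : nat := (nth 0%N b k + k)%N.
Definition Lc (b : seq nat) (d : nat) : nat :=
  count (fun k => (d <= G b k)%N) (iota 0 (size b)).
Definition Nc (b : seq nat) (d : nat) : nat :=
  count (fun k => (d <= G b k)%N && (odd (G b k) != odd d)) (iota 0 (size b)).

Local Open Scope nat_scope.

Lemma nth_gap b i j : isY0 b -> i <= j -> j < size b ->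
  nth 0 b j + (j - i) <= nth 0 b i.
Proof.
move=> /andP[Hs Hp] Hij; elim: j Hij => [|j IH] Hij Hj.
  have -> : i = 0 by lia. by rewrite subnn addn0.
have [->|Hne] := eqVneq i j.+1; first by rewrite subnn addn0.
have Hij' : i <= j by lia.
have Hlt : nth 0 b j.+1 < nth 0 b j.
  have tr : transitive gtn by move=> x y z /= H1 H2; lia.
  have := sorted_ltn_nth tr 0 Hs; move=> /(_ j j.+1); rewrite !inE.
  move=> H; apply: H => //; lia.
have := IH Hij' (ltnW Hj); lia.
Qed.

Lemma G_dec b i j : isY0 b -> i <= j -> j < size b -> G b j <= G b i.
Proof. move=> Hb Hij Hj; have := nth_gap Hb Hij Hj; rewrite /G; lia. Qed.

Lemma G_ge b k : isY0 b -> k < size b -> size b <= G b k.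
Proof.
move=> Hb Hk; have Hn : (size b).-1 < size b by lia.
have := nth_gap Hb (_ : k <= (size b).-1) Hn.
have : 0 < nth 0 b (size b).-1.
  by case/andP: Hb => _ /allP; apply; apply: mem_nth.
rewrite /G; move=> H1 H2; have := H2 (ltac:(lia)); lia.
Qed.

Lemma prefix_count (P : pred nat) n :
  (forall i j, i <= j -> j < n -> P j -> P i) ->
  forall k, k < n -> P k = (k < count P (iota 0 n)).
Proof.
elim: n => [|n IH] Hdc k Hk; first by [].
rewrite -[n.+1]addn1 iotaD count_cat /= addn0 add0n.
have IH' := IH (fun i j Hij Hj => Hdc i j Hij (ltn_trans Hj (ltnSn n))).
have Hc : count P (iota 0 n) <= n by rewrite -{2}(size_iota 0 n) count_size.
case HPn: (P n).
  have Hall : forall j, j < n -> P j by move=> j Hj; apply: (Hdc j n) => //; lia.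
  have Hcn : count P (iota 0 n) = n.
    rewrite (@eq_in_count _ _ predT); first by rewrite count_predT size_iota.
    by move=> j; rewrite mem_iota add0n => /andP[_ Hj]; apply: Hall.
  rewrite Hcn addn1 Hk; apply: (Hdc k n) => //; lia.
rewrite addn0.
have [Hkn|Hkn] := ltnP k n; first exact: IH'.
have -> : k = n by lia.
by rewrite HPn; apply/esym/negbTE; rewrite -leqNgt.
Qed.

Lemma count_par (r : bool) c :
  count (fun k => odd k (+) r) (iota 0 c) = (c + r) %/ 2.
Proof.
elim: c => [|c IH]; first by case: r.
rewrite -[c.+1]addn1 iotaD count_cat IH /= add0n addn0.
have := modn2 c; case: (odd c); move: IH; case: r => /= IH H; lia.
Qed.

Lemma count_sum (T : Type) (P Q R : pred T) (s : seq T) :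
  (forall x, P x + Q x = R x) -> count P s + count Q s = count R s.
Proof.
move=> H; elim: s => //= x s IH; have := H x; lia.
Qed.

Lemma Nc_rec b d : Nc b d + Nc b d.+1 = Lc b d.+1.
Proof.
apply: count_sum => k; set g := G b k.
have [Hlt|Hgt|Heq] := ltngtP d g.
- by rewrite /=; case: (odd g); case: (odd d).
- by [].
- by rewrite -Heq eqxx; case: (d <= d.+1).
Qed.

Lemma oddG b k q : odd (nth 0 b k) = q -> odd (G b k) = q (+) odd k.
Proof. by rewrite /G oddD => ->. Qed.

Lemma Lc_all b : isY0 b -> Lc b (size b) = size b.
Proof.
move=> Hb; rewrite /Lc (@eq_in_count _ _ predT) ?count_predT ?size_iota //.
by move=> k; rewrite mem_iota add0n => /andP[_ Hk]; apply: G_ge.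
Qed.

Lemma good_bounds b (q : bool) d : isY0 b -> all (fun x => odd x == q) b ->
  (Lc b d <= 2 * Nc b d + (odd d == q)) && (2 * Nc b d <= Lc b d + (odd d != q)).
Proof.
move=> Hb Hg; set n := size b.
have Hdc : forall i j, i <= j -> j < n -> (fun k => d <= G b k) j -> (fun k => d <= G b k) i.
  by move=> i j Hij Hj /= H; apply: leq_trans H (G_dec Hb Hij Hj).
have Hpre := prefix_count Hdc.
rewrite -/(Lc b d) in Hpre.
have Hc : Lc b d <= n by rewrite /Lc; apply: leq_trans (count_size _ _) _; rewrite size_iota.
have HN : Nc b d = count (fun k => odd k (+) (q (+) odd d)) (iota 0 (Lc b d)).
  rewrite /Nc -/n -(subnKC Hc) iotaD count_cat add0n.
  rewrite (@eq_in_count _ _ pred0 (iota (Lc b d) _)); last first.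
    move=> k; rewrite mem_iota subnKC // => /andP[H1 H2].
    by rewrite (Hpre k H2) ltnNge H1.
  rewrite count_pred0 addn0; apply: eq_in_count => k.
  rewrite mem_iota add0n => /andP[_ Hk].
  have Hkn : k < n by lia.
  rewrite (Hpre k Hkn) Hk /=.
  have Hq : odd (nth 0 b k) = q.
    by apply/eqP; move/all_nthP: Hg; apply.
  by rewrite (oddG Hq); case: (odd k); case: (odd d); case: (q).

rewrite HN count_par; move: (Lc b d) => c.
by case: (q); case: (odd d) => /=; apply/andP; split; lia.
Qed.

Lemma bad_fail b (q : bool) : isY0 b -> ~~ all (fun x => odd x == q) b ->
  exists k, k < size b /\
    2 * Nc b (G b k) + (odd (G b k) == q) < Lc b (G b k).
Proof.
move=> Hb Hna; set n := size b.
have Hh : has (fun x => odd x != q) b.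
  by rewrite -(eq_has (a1 := predC (fun x => odd x == q))) ?has_predC.
set k := find (fun x => odd x != q) b.
have Hk : k < n by rewrite -has_find.
have Hbadk : odd (nth 0 b k) != q by exact: (nth_find 0 Hh).
have Hbef : forall j, j < k -> odd (nth 0 b j) = q.
  by move=> j Hj; have := before_find 0 Hj; rewrite /= => /negbFE /eqP.
exists k; split => //; set d := G b k.
have Hdc : forall i j, i <= j -> j < n -> (fun k => d <= G b k) j -> (fun k => d <= G b k) i.
  by move=> i j Hij Hj /= H; apply: leq_trans H (G_dec Hb Hij Hj).
have Hpre := prefix_count Hdc.
rewrite -/(Lc b d) in Hpre.
have HL : k < Lc b d by rewrite -Hpre // /d leqnn.
have HN : Nc b d <= count (fun j => odd j (+) (q (+) odd d)) (iota 0 k).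
  rewrite /Nc -/n -(subnKC (ltnW Hk)) iotaD count_cat add0n.
  rewrite (@eq_in_count _ _ pred0 (iota k _)); last first.
    move=> j; rewrite mem_iota subnKC ?(ltnW Hk) // => /andP[H1 H2].
    have Hle := G_dec Hb H1 H2; rewrite /=.
    case Hdj: (d <= G b j) => //=.
    have -> : G b j = d by apply/eqP; rewrite eqn_leq Hle Hdj.
    by rewrite eqxx.
  rewrite count_pred0 addn0.
  rewrite (@eq_in_count _ _ (fun j => (d <= G b j) && (odd j (+) (q (+) odd d)))); last first.
    move=> j; rewrite mem_iota add0n => /andP[_ Hj].
    by rewrite /= (oddG (Hbef j Hj)); case: (odd j); case: (odd d); case: (q).
  by apply: sub_count => j /andP[].
rewrite count_par in HN.
have Hod : odd d = ~~ q (+) odd k.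
  by apply: oddG; move: Hbadk; case: (odd _); case: (q).
move: HN HL; rewrite Hod; move: (Lc b d) (Nc b d) => L N.
have := modn2 k; case: (odd k); case: (q) => /= H1 H2 H3; lia.
Qed.

Import GRing.Theory Num.Theory.
Local Open Scope ring_scope.

Lemma wact_coord k :
  (wact k Lam0).1 = if odd k then (- (k%:R), k.+1%:R) else (k.+1%:R, - (k%:R)) :> rat * rat.
Proof.
elim: k => [|k IH] //=.
rewrite /sref /wadd /wscale /pairing /alpha /=.
case: (wact k Lam0) IH => [[c0 c1] e] /=.
case: (odd k) => /= [][-> ->] /=; congr (_, _); rewrite -!natr1; ring.
Qed.

Lemma pairing_wact t : pairing t (wact t Lam0) = t.+1%:R.
Proof.
have := wact_coord t; rewrite /pairing.
case: (wact t Lam0) => [[c0 c1] e] /=; case: (odd t) => /= [][] //.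
Qed.

Lemma foldr_c0 (s : seq weight) z :
  (foldr wadd z s).1.1 = z.1.1 + \sum_(x <- s) x.1.1.
Proof. elim: s => [|x s IH] /=; first by rewrite big_nil addr0.
by rewrite big_cons IH; ring. Qed.

Lemma foldr_c1 (s : seq weight) z :
  (foldr wadd z s).1.2 = z.1.2 + \sum_(x <- s) x.1.2.
Proof. elim: s => [|x s IH] /=; first by rewrite big_nil addr0.
by rewrite big_cons IH; ring. Qed.

Definition Tt b m j : rat := (Lc b (m.+1 - j))%:R / (m.+1 - j)%:R.
Definition F b d : rat :=
  if odd d then 2 * (Nc b d)%:R - (Lc b d)%:R
  else (Lc b d)%:R + (Lc b d)%:R / d%:R - 2 * (Nc b d)%:R.

Lemma G0 x s : G (x :: s) 0 = x.
Proof. by rewrite /G addn0. Qed.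

Lemma Lc_top x s : isY0 (x :: s) -> Lc (x :: s) x.+1 = 0%N.
Proof.
move=> Hb; rewrite /Lc (@eq_in_count _ _ pred0) ?count_pred0 //.
move=> k; rewrite mem_iota add0n => /andP[_ Hk] /=.
have := G_dec Hb (leq0n k) Hk; rewrite G0 => H; apply/negbTE; rewrite -ltnNge; lia.
Qed.

Lemma Nc_le_Lc b d : (Nc b d <= Lc b d)%N.
Proof. by apply: sub_count => k /andP[]. Qed.

Lemma iconj_Lc b d : isY0 b -> (size b < d)%N -> iconj b d = Lc b d.
Proof.
move=> Hb Hd; rewrite /iconj /btilde count_map /Lc; apply: eq_in_count => k.
rewrite mem_iota add0n => /andP[_ Hk] /=.
have := G_ge Hb Hk; rewrite /G => H.
apply/idP/idP => H'; lia.
Qed.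

Lemma Psi_cons x s : Psi (x :: s) =
  ([seq (x - t)%N | t <- iota 0 (x - size (x :: s)).+1],
     0 :: [seq ((iconj (x :: s) (x - t))%:R / (x - t)%:R : rat) | t <- iota 0 (x - size (x :: s))]
       ++ [:: 1]).
Proof. by []. Qed.

Lemma nth_ds x s k : (k <= x - size (x :: s))%N ->
  nth 0%N (Psi (x :: s)).1 k = (x - k)%N.
Proof.
move=> Hk; rewrite Psi_cons (nth_map 0%N) ?size_iota ?nth_iota //; lia.
Qed.

Lemma nth_ts x s j : isY0 (x :: s) -> (j <= (x - size (x :: s)).+1)%N ->
  nth 0 (Psi (x :: s)).2 j = Tt (x :: s) x j.
Proof.
move=> Hb Hj; rewrite Psi_cons /Tt; set n := size (x :: s).
have Hnx : (n <= x)%N by have := G_ge Hb (ltn0Sn (size s)); rewrite G0.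
case: j Hj => [|j] Hj /=.
  by rewrite subn0 Lc_top // mul0r.
rewrite nth_cat size_map size_iota.
case: ltnP => Hj'.
  rewrite (nth_map 0%N) ?size_iota // nth_iota // add0n subSS.
  rewrite iconj_Lc //; lia.
have -> : j = (x - n)%N by lia.
rewrite subnn /= subSS.
have -> : (x - (x - n))%N = n by lia.
rewrite Lc_all // divff // pnatr_eq0 /n //.
Qed.

Lemma turning_sum p j :
  (turning p j).1.1 = \sum_(k <- iota 1 j)
      ((nth 0 p.2 k - nth 0 p.2 k.-1) * (wact (nth 0%N p.1 k.-1) Lam0).1.1) /\
  (turning p j).1.2 = \sum_(k <- iota 1 j)
      ((nth 0 p.2 k - nth 0 p.2 k.-1) * (wact (nth 0%N p.1 k.-1) Lam0).1.2).
Proof.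
case: p => ds ts; rewrite /turning foldr_c0 foldr_c1 /= !add0r !big_map.
by split.
Qed.

Lemma turning_formula x s j : isY0 (x :: s) -> (j <= (x - size (x :: s)).+1)%N ->
  (turning (Psi (x :: s)) j).1.1 = F (x :: s) (x.+1 - j) /\
  (turning (Psi (x :: s)) j).1.2 = Tt (x :: s) x j - F (x :: s) (x.+1 - j).
Proof.
move=> Hb; set b := x :: s; set n := size b.
have Hnx : (n <= x)%N by have := G_ge Hb (ltn0Sn (size s)); rewrite G0.
have Hn0 : (0 < n)%N by [].
elim: j => [|j IH] Hj.
  rewrite /turning /= subn0 /F /Tt Lc_top //.
  have := Nc_le_Lc b x.+1; rewrite Lc_top // leqn0 => /eqP ->.
  rewrite subn0 /= mul0r; case: (odd _); split; rewrite /=; ring.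
have [IH1 IH2] := IH (ltnW Hj).
have [S1 S2] := turning_sum (Psi b) j.
have [T1 T2] := turning_sum (Psi b) j.+1.
have E : iota 1 j.+1 = iota 1 j ++ [:: j.+1] by rewrite -[j.+1]addn1 iotaD addn1 add1n.
rewrite E big_cat big_seq1 in T1. rewrite E big_cat big_seq1 in T2.
rewrite -S1 IH1 in T1. rewrite -S2 IH2 in T2.
rewrite T1 T2 (_ : j.+1.-1 = j) // (nth_ts Hb Hj) (nth_ts Hb (ltnW Hj)) (@nth_ds x s j); last by rewrite -/b -/n; lia.
set d := (x - j)%N.
have -> : (x.+1 - j.+1)%N = d by rewrite subSS.
have Hd1 : (x.+1 - j)%N = d.+1 by rewrite /d; lia.
rewrite wact_coord /Tt Hd1 subSS -/d.
have Hd0 : (0 < d)%N by rewrite /d; lia.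
have HN := Nc_rec b d.
rewrite /F /=.
have Hr : (d%:R : rat) != 0 by rewrite pnatr_eq0 -lt0n.
have Hr1 : (d%:R + 1 : rat) != 0 by rewrite natr1 pnatr_eq0.
move: HN Hr Hr1; move: (Nc b d) (Nc b d.+1) (Lc b d) (Lc b d.+1) => N0 N1 L0 L1 HN Hr Hr1.
have HN' : (N0%:R : rat) = L1%:R - N1%:R by rewrite -HN natrD; ring.
have Ed : ((d.+1)%:R : rat) = d%:R + 1 by rewrite natr1.
rewrite HN' Ed; move: Hr Hr1; move: (d%:R : rat) => r Hr Hr1.
case: (odd d) => /=; split; field; rewrite ?Hr ?Hr1 //.
Qed.

Lemma Lc_pos b x s d : b = x :: s -> isY0 b -> (d <= x)%N -> (0 < Lc b d)%N.
Proof.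
move=> -> Hb Hd; rewrite /Lc -has_count; apply/hasP; exists 0%N.
  by rewrite mem_iota.
by rewrite /= G0.
Qed.

Lemma Lc_mono b d : (Lc b d.+1 <= Lc b d)%N.
Proof. by apply: sub_count => k /= H; apply: ltnW. Qed.

Lemma LS_cons x s : isY0 (x :: s) -> is_LS (Psi (x :: s)).
Proof.
move=> Hb; set b := x :: s; set n := size b.
have Hnx : (n <= x)%N by have := G_ge Hb (ltn0Sn (size s)); rewrite G0.
have Hn0 : (0 < n)%N by [].
have Hsd : size (Psi b).1 = (x - n).+1 by rewrite Psi_cons size_map size_iota.
have Hst : size (Psi b).2 = (x - n).+2.
  by rewrite Psi_cons /= size_cat size_map size_iota addn1.
rewrite /is_LS; case E: (Psi b) => [ds ts].
rewrite E /= in Hsd Hst.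
have Hds : forall k, (k <= x - n)%N -> nth 0%N ds k = (x - k)%N.
  by move=> k Hk; have := nth_ds Hk; rewrite -/b E.
have Hts : forall j, (j <= (x - n).+1)%N -> nth 0 ts j = Tt b x j.
  by move=> j Hj; have := nth_ts Hb Hj; rewrite -/b E.
rewrite Hsd; split=> //; split; first by rewrite Hst.
split; first by rewrite Hts // /Tt subn0 Lc_top // mul0r.
split.
  rewrite Hts // /Tt.
  have -> : (x.+1 - (x - n).+1)%N = n by lia.
  by rewrite Lc_all // divff // pnatr_eq0.
split.
  apply/(sortedP 0%N) => k; rewrite Hsd => Hk.
  rewrite !Hds /=; lia.
split.
  apply/(sortedP 0) => k; rewrite Hst => Hk.
  rewrite !Hts ?ltnS; [|lia|lia].
  rewrite /Tt.
  have -> : (x.+1 - k = (x - k).+1)%N by lia.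
  have -> : (x.+1 - k.+1 = x - k)%N by lia.
  set e := (x - k)%N.
  have He : (0 < e)%N by rewrite /e; lia.
  have H1 := Lc_mono b e.
  have H2 : (0 < Lc b e)%N by apply: (Lc_pos (erefl b)) => //; rewrite /e; lia.
  rewrite ltr_pdivrMr ?ltr0n // mulrAC ltr_pdivlMr ?ltr0n //.
  rewrite -!natrM ltr_nat; nia.
move=> j Hj1 Hj2; rewrite /a_chain.
rewrite !Hds; [|lia|lia].
split; first by lia.
move=> t Ht1 Ht2.
have -> : t = (x - j)%N by lia.
rewrite pairing_wact Hts; last by lia.
rewrite /Tt.
have -> : (x.+1 - j = (x - j).+1)%N by lia.
rewrite divfK ?pnatr_eq0 //.
by exists (Lc b (x - j).+1)%:Z.
Qed.

Lemma dom_iff i t : (i < 2)%N -> (dominant (wadd (Lam i) t) <->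
  (0 <= (i == 0%N)%:R + t.1.1 /\ 0 <= (~~ (i == 0%N))%:R + t.1.2)).
Proof. by case: i => [|[|]] //= _; rewrite /dominant /pairing /=. Qed.

Lemma dom_from b d (q : bool) : (0 < d)%N ->
  (Lc b d <= 2 * Nc b d + (odd d == q))%N -> (2 * Nc b d <= Lc b d + (odd d != q))%N ->
  0 <= q%:R + F b d /\ 0 <= (~~ q)%:R + (Lc b d)%:R / (d%:R) - F b d.
Proof.
move=> Hd; rewrite /F; move: (Lc b d) (Nc b d) => L N.
have Hp : 0 <= (L%:R : rat) / d%:R by apply: divr_ge0; apply: ler0n.
move: Hp; move: (L%:R / d%:R : rat) => y Hp.
case: (odd d); case: q => /= H1 H2;
  move: H1 H2; rewrite -(ler_nat rat) -(ler_nat rat) => H1 H2; rewrite !natrD in H1 H2; split; lra.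
Qed.

Lemma dom_to b d (q : bool) :
  0 <= q%:R + F b d -> 0 <= (~~ q)%:R + (Lc b d)%:R / (d%:R) - F b d ->
  (Lc b d <= 2 * Nc b d + (odd d == q))%N.
Proof.
rewrite /F; move: (Lc b d) (Nc b d) => L N.
move: (L%:R / d%:R : rat) => y.
case: (odd d); case: q => /= H1 H2; rewrite -(ler_nat rat) !natrD; lra.
Qed.

Lemma lam_dom_cons i x s : (i < 2)%N -> isY0 (x :: s) ->
  (lam_dominant (Lam i) (Psi (x :: s)) <-> all (fun y => odd y == (i == 0%N)) (x :: s)).
Proof.
move=> Hi Hb; set b := x :: s; set n := size b; set q := (i == 0%N).
have Hnx : (n <= x)%N by have := G_ge Hb (ltn0Sn (size s)); rewrite G0.
have Hn0 : (0 < n)%N by [].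
have Hsd : size (Psi b).1 = (x - n).+1 by rewrite Psi_cons size_map size_iota.
split.
  move=> Hdom; apply/negPn/negP => Hna.
  have [k [Hk Hbad]] := bad_fail Hb Hna.
  set d := G b k in Hbad.
  have Hd1 : (n <= d)%N by apply: G_ge.
  have Hd2 : (d <= x)%N by rewrite -[x](G0 x s); apply: G_dec.
  have Hj : (x.+1 - d <= (x - n).+1)%N by lia.
  have := Hdom (x.+1 - d)%N; rewrite Hsd => /(_ Hj) /(dom_iff _ Hi).
  have [T1 T2] := turning_formula Hb Hj.
  have E : (x.+1 - (x.+1 - d))%N = d by lia.
  rewrite T1 T2 /Tt E.
  rewrite -/q => [[D1 D2]].
  have := @dom_to b d q D1; rewrite -addrA => /(_ D2); rewrite -/b in Hbad; lia.
move=> Hg j; rewrite Hsd => Hj.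
apply/(dom_iff _ Hi).
have [T1 T2] := turning_formula Hb Hj.
rewrite T1 T2 /Tt -/q.
set d := (x.+1 - j)%N.
have Hd : (0 < d)%N by rewrite /d; lia.
have /andP[B1 B2] := good_bounds d Hb Hg.
have [D1 D2] := dom_from Hd B1 B2.
split => //; lra.
Qed.

Theorem mainTheorem4 (i m : nat) (b : seq nat) :
  (i < 2)%N -> isY0 b ->
  (P_set i m (Psi b) <->
   (all (fun x => odd x == (i == 0%N)) b && (head 0%N b <= m)%N)).
Proof.
move=> Hi Hb; case: b Hb => [|x s] Hb.
  rewrite /P_set /= leq0n; split => // _; split.
    split => //; split => //; split => //; split => //; split => //; split => //.
    by move=> j H1 H2; lia.
  split => //.
  move=> j Hj; apply/(dom_iff _ Hi).
  case: j Hj => [|[|]] //= _; case: i Hi => [|[|]] //= _;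
    rewrite /turning /= /wadd /wscale /=; split; lra.
rewrite /P_set /init_dir.
have HLS := LS_cons Hb.
rewrite (nth_ds (k := 0)) // subn0 [head _ _]/=.
have [H1 H2] := lam_dom_cons Hi Hb.
split.
  by case=> _ [/H1 -> ->].
by case/andP => /H2 Hd Hx.

Qed.
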